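(* There is a function $\varepsilon(n)\to 0$ as $n\to\infty$ such that for every $n\ge 4$, the number of pairwise non-equivalent quadrilateral embeddings of $L_n$ (equivalently, embeddings of $K_n^3$ in surfaces of Euler genus $\frac{(n-2)(n+3)(n-4)}{12}$) is at most $2^{(\frac14+\varepsilon(n))\,n^3\log_2 n}$.
   Context: $K_n^3$ is the complete $3$-uniform hypergraph on $[n]$; an embedding of $K_n^3$ is a 2-cell embedding of its Levi graph $L_n$, the bipartite graph with vertex set $[n]\sqcup\binom{[n]}{3}$ in which $i$ is adjacent to triple $t$ iff $i\in t$. A quadrilateral embedding is a 2-cell embedding in which every face is bounded by a closed walk of length $4$. The Euler genus of the orientable surface of genus $h$ is $2h$ and of the non-orientable surface with $c$ crosscaps is $c$. Two embeddings $\phi_1,\phi_2$ in a surface $S$ are equivalent if $\phi_2=h\phi_1$ for a homeomorphism $h:S\to S$. *)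

(* Defs.v *)
From Stdlib Require Import Reals.
From mathcomp Require Import all_boot all_fingroup.

Set Implicit Arguments.
Unset Strict Implicit.
Unset Printing Implicit Defensive.

Local Open Scope nat_scope.

(* The Levi graph L_n of the complete 3-uniform hypergraph K_n^3.          *)
Definition triple (n : nat) := {A : {set 'I_n} | #|A| == 3}.
Definition LV (n : nat) : finType := ('I_n + triple n)%type.

Definition Ladj (n : nat) : rel (LV n) := fun x y =>
  match x, y with
  | inl i, inr t => i \in val t
  | inr t, inl i => i \in val t
  | _, _ => false
  end.

(* Combinatorial description of 2-cell embeddings (Mohar--Thomassen,      *)
(* "Graphs on Surfaces", Ch. 3): general embedding schemes (rotation      *)
(* system + edge signature), facial walks by face tracing, and            *)
(* equivalence of embeddings = equivalence of schemes under local         *)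
(* switches (Thm 3.3.1).  Graph: simple graph on finType V with adjacency *)
(* relation adj.  Signature value true means "-1" (twisted edge).         *)
Section Embeddings.
Variables (V : finType) (adj : rel V).

Definition scheme : finType :=
  ({ffun V -> {perm V}} * {ffun (V * V) -> bool})%type.

Definition is_scheme (s : scheme) : bool :=
  [&& [forall v, forall w, ~~ adj v w ==> (s.1 v w == w)],
      [forall v, forall w, forall w',
          adj v w && adj v w' ==> fconnect (s.1 v) w w'],
      [forall u, forall v, s.2 (u, v) == s.2 (v, u)] &
      [forall u, forall v, ~~ adj u v ==> ~~ s.2 (u, v)]].

Definition switch (v : V) (s : scheme) : scheme :=
  ([ffun x => if x == v then (s.1 x)^-1%g else s.1 x],
   [ffun e => s.2 e (+) (((e.1 == v) && adj v e.2) || ((e.2 == v) && adj v e.1))]).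

Definition switch_rel : rel scheme :=
  fun s t => [exists v, t == switch v s].

Definition scheme_equiv (s t : scheme) : bool := connect switch_rel s t.

(* face tracing: a state is (u, v, b) = traversing dart u->v with current
   local orientation b (true = reversed). *)
Definition face_step (s : scheme) (x : V * V * bool) : V * V * bool :=
  let: (u, v, b) := x in
  let b' := b (+) s.2 (u, v) in
  (v, (if b' then (s.1 v)^-1%g u else s.1 v u), b').

Definition quadrilateral (s : scheme) : bool :=
  [forall u, forall v, forall b,
     adj u v ==> (fingraph.order (face_step s) (u, v, b) == 4)].

Definition num_quad_embeddings : nat :=
  #|[set [set t | scheme_equiv s t] | s in [set s | is_scheme s && quadrilateral s]]|.

End Embeddings.

(* Main.v *)
Require Import Defs.
From Stdlib Require Import Reals.
From mathcomp Require Import all_boot all_fingroup.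
Local Open Scope R_scope.
From Stdlib Require Import Lra.
From mathcomp Require Import zify.
Set Implicit Arguments.
Unset Strict Implicit.
Unset Printing Implicit Defensive.
Local Open Scope nat_scope.

Lemma LadjC n (x y : LV n) : Ladj x y = Ladj y x.
Proof. by case: x; case: y. Qed.

Lemma sch_parts n (s : scheme (LV n)) : is_scheme (@Ladj n) s ->
  [/\ forall v w, ~~ Ladj v w -> s.1 v w = w,
      forall v w w', Ladj v w -> Ladj v w' -> fconnect (s.1 v) w w',
      forall u v, s.2 (u, v) = s.2 (v, u) &
      forall u v, ~~ Ladj u v -> s.2 (u, v) = false].
Proof.
case/and4P => /forallP h1 /forallP h2 /forallP h3 /forallP h4; split.
- by move=> v w H; move: (h1 v) => /forallP /(_ w) /implyP /(_ H) /eqP.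
- by move=> v w w' H H'; move: (h2 v) => /forallP /(_ w) /forallP /(_ w') /implyP; apply; rewrite H H'.
- by move=> u v; move: (h3 u) => /forallP /(_ v) /eqP.
- by move=> u v H; move: (h4 u) => /forallP /(_ v) /implyP /(_ H) /negbTE.
Qed.

Lemma iter_fix (T : Type) (f : T -> T) x k : f x = x -> iter k f x = x.
Proof. by move=> h; elim: k => //= k ->. Qed.

Lemma iter_2 (T : Type) (f : T -> T) x k : f (f x) = x -> iter k f x = x \/ iter k f x = f x.
Proof. by move=> h; elim: k => [|k [] /= ->]; [left|right|left]. Qed.

Lemma rot_fix n (s : scheme (LV n)) v w : is_scheme (@Ladj n) s -> ~~ Ladj v w -> s.1 v w = w.
Proof. by case/sch_parts => h _ _ _; apply: h. Qed.

Lemma rot_adj n (s : scheme (LV n)) v w : is_scheme (@Ladj n) s -> Ladj v w -> Ladj v (s.1 v w).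
Proof.
move=> hs H; apply: contraT => H'.
have := rot_fix hs H'; move/perm_inj => E; by rewrite E H in H'.
Qed.

Lemma rotV_adj n (s : scheme (LV n)) v w : is_scheme (@Ladj n) s -> Ladj v w -> Ladj v ((s.1 v)^-1%g w).
Proof.
move=> hs H; apply: contraT => H'.
have := rot_fix hs H'; rewrite permKV => E; by rewrite -E H in H'.
Qed.

Lemma rot_nofix n (s : scheme (LV n)) v w w' : is_scheme (@Ladj n) s ->
  Ladj v w -> Ladj v w' -> w != w' -> s.1 v w != w.
Proof.
move=> hs H H' ne; apply/eqP => E.
have [_ hc _ _] := sch_parts hs.
have := iter_findex (hc _ _ _ H H'); rewrite iter_fix // => E'.
by rewrite E' eqxx in ne.
Qed.

Lemma rot_no2 n (s : scheme (LV n)) v w w' w'' : is_scheme (@Ladj n) s ->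
  Ladj v w -> Ladj v w' -> Ladj v w'' -> w != w' -> w != w'' -> w' != w'' ->
  s.1 v (s.1 v w) != w.
Proof.
move=> hs H H' H'' n1 n2 n3; apply/eqP => E.
have [_ hc _ _] := sch_parts hs.
have := iter_findex (hc _ _ _ H H'); have := iter_findex (hc _ _ _ H H'').
case: (iter_2 (findex (s.1 v) w w'') E) => ->.
  by move=> E1; rewrite E1 eqxx in n2.
case: (iter_2 (findex (s.1 v) w w') E) => ->.
  by move=> _ E1; rewrite E1 eqxx in n1.
by move=> -> E2; rewrite E2 eqxx in n3.
Qed.

Lemma face_inj n (s : scheme (LV n)) : injective (face_step s).
Proof.
move=> [[u1 v1] b1] [[u2 v2] b2]; rewrite /face_step.
case=> ev; subst v2.
set c1 := b1 (+) _; set c2 := b2 (+) _ => ew ec.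
have eu : u1 = u2.
  by move: ew; rewrite ec; case: (c2) => /perm_inj.
subst u2; congr (_, _); move: ec; rewrite /c1 /c2.
by case: (s.2 _); rewrite ?addbT ?addbF; [move/negb_inj|].
Qed.

Lemma GQ n (s : scheme (LV n)) u v : is_scheme (@Ladj n) s -> quadrilateral (@Ladj n) s ->
  Ladj u v ->
  exists w, [/\ Ladj (s.1 v u) w, (w = s.1 (s.1 v u) v \/ s.1 (s.1 v u) w = v),
     Ladj w u & (s.1 w (s.1 v u) = u \/ s.1 w u = s.1 v u)].
Proof.
move=> hs hq H.
have ho : fingraph.order (face_step s) (u, v, s.2 (u, v)) = 4.
  by apply/eqP; move: hq => /forallP /(_ u) /forallP /(_ v) /forallP /(_ (s.2 (u, v))) /implyP; apply.
have := iter_order (@face_inj n s) (u, v, s.2 (u, v)); rewrite ho /=.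
rewrite /face_step addbb /=.
set w1 := s.1 v u.
set b2 := false (+) s.2 (v, w1).
set w := (if b2 then _ else _).
set b3 := b2 (+) s.2 (w1, w).
set z := (if b3 then _ else _).
set b4 := b3 (+) s.2 (w, z).
case => Ez _ _.
have Hv : Ladj v w1 by apply: rot_adj; rewrite // LadjC.
have Hw : Ladj w1 w.
  by rewrite /w; case: (b2); [apply: rotV_adj | apply: rot_adj]; rewrite // LadjC.
exists w; split => //.
- rewrite /w; case: (b2); [right; exact: permKV | by left].
- rewrite -Ez /z; case: (b3); [apply: rotV_adj|apply: rot_adj]; rewrite // LadjC //.
- rewrite -Ez /z; case: (b3); [right; exact: permKV| by left].
Qed.

Lemma card3 (T : finType) (i x y : T) : i != x -> i != y -> x != y -> #|(i |: (x |: [set y]))| = 3.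
Proof.
move=> h1 h2 h3; rewrite !cardsU1 cards1 !inE negb_or h1 h2 h3.
done.
Qed.

Lemma key3 n (A B : triple n) i x y : i != x -> i != y -> x != y ->
  i \in val A -> x \in val A -> y \in val A ->
  i \in val B -> x \in val B -> y \in val B -> A = B.
Proof.
move=> h1 h2 h3 iA xA yA iB xB yB.
have e : forall C : triple n, i \in val C -> x \in val C -> y \in val C -> val C = (i |: (x |: [set y])).
  move=> C iC xC yC; apply/eqP; rewrite eq_sym eqEcard card3 // (eqP (valP C)) andbT.
  by apply/subsetP => z; rewrite !inE; case/orP => [/eqP -> //|/orP [] /eqP -> //].
by apply: val_inj; rewrite (e A iA xA yA) (e B iB xB yB).
Qed.

Lemma cardD1_3 n (t : triple n) a : a \in val t -> #|val t :\ a| = 2.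
Proof.
move=> aT; have := cardsD1 a (val t); rewrite (eqP (valP t)) aT add1n.
by case.
Qed.

Lemma triple_ex n (t : triple n) a k : a \in val t -> k \notin val t ->
  exists u : triple n, val u = (val t :\ a) :|: [set k].
Proof.
move=> aT kT.
have c : #|(val t :\ a) :|: [set k]| == 3.
  by rewrite setUC cardsU1 !inE negb_and kT orbT cardD1_3.
by exists (exist (fun A : {set 'I_n} => #|A| == 3) _ c).
Qed.

Lemma other_triple n (t : triple n) i : 4 <= n -> i \in val t ->
  exists u : triple n, (i \in val u) && (u != t).
Proof.
move=> n4 it.
have [k kt] : exists k, k \notin val t.
  have : 0 < #|~: val t| by have := cardsC (val t); rewrite card_ord (eqP (valP t)); lia.
  by case/card_gt0P => k; rewrite inE => ?; exists k.
have [a ai] : exists a, a \in val t :\ i.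
  have : 0 < #|val t :\ i| by rewrite cardD1_3.
  by case/card_gt0P => a ?; exists a.
move: ai; rewrite !inE => /andP [ai at_].
have [u eu] := triple_ex at_ kt.
exists u; rewrite eu !inE eq_sym ai it /=.
apply/eqP => E; move: kt; rewrite -E eu !inE eqxx; by rewrite orbT.
Qed.

Definition tv n (t : triple n) : LV n := @inr 'I_n (triple n) t.
Definition pv n (i : 'I_n) : LV n := @inl 'I_n (triple n) i.

Definition rtr n (s : scheme (LV n)) (i : 'I_n) (t : triple n) : triple n :=
  match s.1 (pv i) (tv t) with inr u => u | inl _ => t end.

Definition pt n (s : scheme (LV n)) (t : triple n) (k : 'I_n) : 'I_n :=
  match s.1 (tv t) (pv k) with inl k' => k' | inr _ => k end.

Definition qs n (s : scheme (LV n)) := is_scheme (@Ladj n) s && quadrilateral (@Ladj n) s.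

Lemma rtrE n (s : scheme (LV n)) (i : 'I_n) (t : triple n) : is_scheme (@Ladj n) s -> i \in val t ->
  s.1 (pv i) (tv t) = tv (rtr s i t) /\ i \in val (rtr s i t).
Proof.
move=> hs it; have := rot_adj hs (it : Ladj (pv i) (tv t)).
by rewrite /rtr; case: (s.1 (pv i) (tv t)).
Qed.

Lemma ptE n (s : scheme (LV n)) (t : triple n) (k : 'I_n) : is_scheme (@Ladj n) s -> k \in val t ->
  s.1 (tv t) (pv k) = pv (pt s t k) /\ pt s t k \in val t.
Proof.
move=> hs it; have := rot_adj hs (it : Ladj (tv t) (pv k)).
by rewrite /pt; case: (s.1 (tv t) (pv k)).
Qed.

Lemma rtr_neq n (s : scheme (LV n)) (i : 'I_n) (t : triple n) : 4 <= n -> is_scheme (@Ladj n) s -> i \in val t ->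
  rtr s i t != t.
Proof.
move=> n4 hs it; have [u /andP [iu ut]] := other_triple n4 it.
have := rot_nofix hs (it : Ladj (pv i) (tv t)) (iu : Ladj (pv i) (tv u)).
rewrite (_ : (tv t != tv u) = true); last by apply/eqP => [[E]]; rewrite E eqxx in ut.
have [-> _] := rtrE hs it; move/(_ isT); apply: contra => /eqP -> //.
Qed.

Lemma rtr_inj n (s : scheme (LV n)) (i : 'I_n) (t1 t2 : triple n) : is_scheme (@Ladj n) s -> i \in val t1 -> i \in val t2 ->
  rtr s i t1 = rtr s i t2 -> t1 = t2.
Proof.
move=> hs h1 h2 E; have [e1 _] := rtrE hs h1; have [e2 _] := rtrE hs h2.
by move: e1; rewrite E -e2 => /perm_inj [].
Qed.

Lemma pt_neq n (s : scheme (LV n)) (t : triple n) (i : 'I_n) : is_scheme (@Ladj n) s -> i \in val t -> pt s t i != i.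
Proof.
move=> hs it.
have [a ai] : exists a, a \in val t :\ i.
  have : 0 < #|val t :\ i| by rewrite cardD1_3.
  by case/card_gt0P => a ?; exists a.
move: ai; rewrite !inE => /andP [ai at_].
have := rot_nofix hs (it : Ladj (tv t) (pv i)) (at_ : Ladj (tv t) (pv a)).
rewrite (_ : (pv i != pv a) = true); last by apply/eqP => [[E]]; rewrite E eqxx in ai.
have [-> _] := ptE hs it; move/(_ isT); apply: contra => /eqP -> //.
Qed.

Lemma Qlem n (s : scheme (LV n)) (i : 'I_n) (t : triple n) : 4 <= n -> qs s -> i \in val t ->
  exists x, [/\ x != i, x \in val t, x \in val (rtr s i t) &
              (rtr s x (rtr s i t) = t \/ rtr s x t = rtr s i t)].
Proof.
move=> n4 /andP [hs hq] it.
have [w [H1 H2 H3 H4]] := GQ hs hq (it : Ladj (tv t) (pv i)).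
have [E1 it'] := rtrE hs it.
rewrite E1 in H1 H2 H3 H4.
case: w H1 H2 H3 H4 => // x /= xt' H2 xt H4.
exists x; split => //.
- apply/eqP => E; subst x.
  have [e _] := ptE hs it'; have ne := pt_neq hs it'.
  case: H2 => E.
    by move: E; rewrite -/(pv i) e => [[E]]; rewrite -E eqxx in ne.
  by move: E; rewrite -/(pv i) e => [[E]]; rewrite E eqxx in ne.
- have [e1 _] := rtrE hs xt'; have [e2 _] := rtrE hs xt.
  by case: H4 => H4; [left; move: H4; rewrite -/(pv x) e1 => [[]] | right; move: H4; rewrite -/(pv x) e2 => [[]]].
Qed.

Definition op n (s : scheme (LV n)) (i : 'I_n) (t : triple n) : 'I_n :=
  odflt i [pick x | (x != i) && (x \in val t) && (x \in val (rtr s i t))].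

Lemma op_uniq n (s : scheme (LV n)) (i : 'I_n) (t : triple n) (x : 'I_n) : 4 <= n -> qs s -> i \in val t ->
  x != i -> x \in val t -> x \in val (rtr s i t) -> x = op s i t.
Proof.
move=> n4 q it xi xt xt'; rewrite /op; case: pickP => [y /andP [/andP [yi yt] yt'] | ]; last first.
  by move/(_ x); rewrite xi xt xt'.
apply/eqP; apply: contraT => xy /=.
have [hs _] := andP q.
rewrite /= in xy.
suff: rtr s i t = t by move/eqP; rewrite (negbTE (rtr_neq n4 hs it)).
apply: (@key3 _ _ _ i x y) => //; try by rewrite eq_sym.
exact: (rtrE hs it).2.
Qed.

Lemma opP n (s : scheme (LV n)) (i : 'I_n) (t : triple n) : 4 <= n -> qs s -> i \in val t ->
  let x := op s i t in [/\ x != i, x \in val t, x \in val (rtr s i t) &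
              (rtr s x (rtr s i t) = t \/ rtr s x t = rtr s i t)].
Proof.
move=> n4 q it; have [x [h1 h2 h3 h4]] := Qlem n4 q it.
by rewrite -(op_uniq n4 q it h1 h2 h3).
Qed.

Definition yv n (s : scheme (LV n)) (i : 'I_n) (t : triple n) : 'I_n :=
  odflt i [pick y | (y \in val (rtr s i t)) && (y \notin val t)].

Lemma yP n (s : scheme (LV n)) (i : 'I_n) (t : triple n) : 4 <= n -> is_scheme (@Ladj n) s -> i \in val t ->
  yv s i t \in val (rtr s i t) /\ yv s i t \notin val t.
Proof.
move=> n4 hs it; rewrite /yv; case: pickP => [y /andP [] // | H].
have := rtr_neq n4 hs it; rewrite -(inj_eq val_inj).
have -> : val (rtr s i t) == val t.
  rewrite eqEcard (eqP (valP t)) (eqP (valP (rtr s i t))) leqnn andbT.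
  by apply/subsetP => y yt'; move: (H y); rewrite yt' /= => /negbFE.
by [].
Qed.

Definition idx n (t : triple n) (k : 'I_n) : 'I_3 := inord (index k (enum (val t))).

Lemma idx_inj n (t : triple n) k1 k2 : k1 \in val t -> k2 \in val t -> idx t k1 = idx t k2 -> k1 = k2.
Proof.
have h k : k \in val t -> nat_of_ord (idx t k) = index k (enum (val t)).
  move=> kt; rewrite /idx inordK //.
  have s3 : size (enum (val t)) = 3 by rewrite -cardE (eqP (valP t)).
  have H : index k (enum (val t)) < size (enum (val t)) by rewrite index_mem mem_enum.
  by rewrite s3 in H.
move=> h1 h2 E.
have E' : index k1 (enum (val t)) = index k2 (enum (val t)) by rewrite -h // -h // E.
have e1 := nth_index k1 (s := enum (val t)) (x := k1); have e2 := nth_index k1 (s := enum (val t)) (x := k2).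
by rewrite -e1 ?mem_enum // E' e2 // mem_enum.
Qed.

Definition W1 := (bool * 'I_3 * 'I_3 * bool)%type.

Definition code1 n (s : scheme (LV n)) : {ffun 'I_n * triple n -> W1} :=
  [ffun p : 'I_n * triple n => if p.1 \in val p.2 then
      (s.2 (pv p.1, tv p.2), idx p.2 (pt s p.2 p.1), idx p.2 (op s p.1 p.2),
       rtr s (op s p.1 p.2) p.2 == rtr s p.1 p.2)
    else (false, ord0, ord0, false)].

Definition code2 n (s : scheme (LV n)) : {ffun 'I_n * triple n -> option 'I_n} :=
  [ffun p : 'I_n * triple n => if (p.1 \in val p.2) && (p.1 < op s p.1 p.2) then Some (yv s p.1 p.2) else None].

Lemma ffeq (aT rT : finType) (f g : {ffun aT -> rT}) x : f = g -> f x = g x.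
Proof. by move=> ->. Qed.

Lemma op_eq n (s : scheme (LV n)) (x : 'I_n) (u : triple n) (i : 'I_n) : 4 <= n -> qs s -> x \in val u -> i != x ->
  i \in val u -> i \in val (rtr s x u) -> op s x u = i.
Proof. by move=> n4 q xu ix iu iu'; rewrite -(op_uniq n4 q xu ix iu iu'). Qed.

Lemma canon_det n (s1 s2 : scheme (LV n)) (i : 'I_n) (t : triple n) : 4 <= n -> qs s1 -> qs s2 ->
  code1 s1 = code1 s2 -> code2 s1 = code2 s2 -> i \in val t -> i < op s1 i t ->
  rtr s1 i t = rtr s2 i t.
Proof.
move=> n4 q1 q2 c1 c2 it lt.
have [hs1 _] := andP q1; have [hs2 _] := andP q2.
have := ffeq (i, t) c1; rewrite !ffunE /= it => [[_ _ ex _]].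
have [a1 b1 c1' _] := opP n4 q1 it; have [a2 b2 c2' _] := opP n4 q2 it.
have eop := idx_inj b1 b2 ex.
have := ffeq (i, t) c2; rewrite !ffunE /= it -eop lt /= => [[ey]].
have [y1a y1b] := yP n4 hs1 it; have [y2a y2b] := yP n4 hs2 it.
apply: (@key3 _ _ _ i (op s1 i t) (yv s1 i t)).
- by rewrite eq_sym.
- by apply: contraNneq y1b => <-.
- by apply: contraNneq y1b => <-.
- exact: (rtrE hs1 it).2.
- done.
- done.
- exact: (rtrE hs2 it).2.
- by rewrite eop.
- by rewrite ey.
Qed.

Lemma rtr_all n (s1 s2 : scheme (LV n)) (i : 'I_n) (t : triple n) : 4 <= n -> qs s1 -> qs s2 ->
  code1 s1 = code1 s2 -> code2 s1 = code2 s2 -> i \in val t ->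
  rtr s1 i t = rtr s2 i t.
Proof.
move=> n4 q1 q2 c1 c2 it.
have [hs1 _] := andP q1; have [hs2 _] := andP q2.
have [a1 b1 c1' d1] := opP n4 q1 it; have [a2 b2 c2' d2] := opP n4 q2 it.
have := ffeq (i, t) c1; rewrite !ffunE /= it => [[_ _ ex eb]].
have eop := idx_inj b1 b2 ex.
rewrite -eop in a2 b2 c2' d2 eb.
set x := op s1 i t in a1 b1 c1' d1 a2 b2 c2' d2 eb eop *.
case: (ltngtP i x) => [lt | gt | eq].
- exact: canon_det.
- case e1 : (rtr s1 x t == rtr s1 i t) in eb.
  + move/eqP: e1 => e1; move/esym/eqP: eb => e2.
    rewrite -e1 -e2; apply: canon_det => //.
    by rewrite (@op_eq _ _ _ _ i n4 q1 b1) // ?e1 ?(rtrE hs1 it).2 // eq_sym.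
  + have f1 : rtr s1 x (rtr s1 i t) = t.
      by case: d1 => // h; rewrite h eqxx in e1.
    have f2 : rtr s2 x (rtr s2 i t) = t.
      by case: d2 => // h; rewrite h eqxx in eb.
    apply: (rtr_inj hs2 c1' c2').
    rewrite f2 -(canon_det n4 q1 q2 c1 c2 c1') ?f1 //.
    rewrite (@op_eq _ _ _ _ i n4 q1 c1') // ?f1 ?(rtrE hs1 it).2 // eq_sym //.
- by move: a1; rewrite (ord_inj eq) eqxx.
Qed.

Lemma sig_eq n (s1 s2 : scheme (LV n)) (i : 'I_n) (t : triple n) :
  is_scheme (@Ladj n) s1 -> is_scheme (@Ladj n) s2 -> code1 s1 = code1 s2 ->
  s1.2 (pv i, tv t) = s2.2 (pv i, tv t).
Proof.
move=> hs1 hs2 c1.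
have [_ _ _ z1] := sch_parts hs1; have [_ _ _ z2] := sch_parts hs2.
case it : (i \in val t).
  by have := ffeq (i, t) c1; rewrite !ffunE /= it => [[]].
by rewrite z1 ?z2 //= it.
Qed.

Lemma code_inj n (s1 s2 : scheme (LV n)) : 4 <= n -> qs s1 -> qs s2 ->
  code1 s1 = code1 s2 -> code2 s1 = code2 s2 -> s1 = s2.
Proof.
move=> n4 q1 q2 c1 c2.
have [hs1 _] := andP q1; have [hs2 _] := andP q2.
have e1 : s1.1 = s2.1.
  apply/ffunP => v; apply/permP => w.
  case: v => [i|t]; case: w => [k|u].
  - by rewrite (rot_fix hs1) ?(rot_fix hs2).
  - case iu : (i \in val u).
      have [-> _] := rtrE hs1 iu; have [-> _] := rtrE hs2 iu.
      by rewrite (rtr_all n4 q1 q2 c1 c2 iu).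
    by rewrite (rot_fix hs1) ?(rot_fix hs2) //= iu.
  - case kt : (k \in val t).
      have [-> p1] := ptE hs1 kt; have [-> p2] := ptE hs2 kt.
      have := ffeq (k, t) c1; rewrite !ffunE /= kt => [[_ ex _ _]].
      by rewrite (idx_inj p1 p2 ex).
    by rewrite (rot_fix hs1) ?(rot_fix hs2) //= kt.
  - by rewrite (rot_fix hs1) ?(rot_fix hs2).
have e2 : s1.2 = s2.2.
  have [_ _ y1 z1] := sch_parts hs1; have [_ _ y2 z2] := sch_parts hs2.
  apply/ffunP => [[v w]].
  case: v => [i|t]; case: w => [k|u].
  - by rewrite z1 ?z2.
  - exact: sig_eq.
  - by rewrite y1 y2; apply: sig_eq.
  - by rewrite z1 ?z2.
by case: s1 s2 e1 e2 {c1 c2 q1 q2 hs1 hs2} => ? ? [? ?] /= -> ->.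
Qed.

Lemma no2cyc n (s : scheme (LV n)) (i : 'I_n) (t : triple n) : 4 <= n -> qs s -> i \in val t ->
  rtr s i (rtr s i t) != t.
Proof.
move=> n4 q it; have [hs _] := andP q.
have [a b c _] := opP n4 q it.
set x := op s i t in a b c.
have [ya yb] := yP n4 hs it.
have [u3 eu] := triple_ex b yb.
have [e1 it'] := rtrE hs it.
have [e2 it''] := rtrE hs it'.
have iu : i \in val u3 by rewrite eu !inE eq_sym a it /=.
have yu : yv s i t \in val u3 by rewrite eu !inE eqxx orbT.
have xu : op s i t \notin val u3.
  rewrite eu !inE eqxx /=; apply/eqP => exy; move: yb; by rewrite -exy b.
have nt1 : tv t != tv u3.
  by apply/eqP => [[E]]; move: yu; rewrite -E (negbTE yb).
have nt2 : tv (rtr s i t) != tv u3.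
  by apply/eqP => [[E]]; move: xu; rewrite -E c.
have n12 : tv t != tv (rtr s i t).
  by apply/eqP => [[E]]; move: (rtr_neq n4 hs it); rewrite -E eqxx.
have := rot_no2 hs (it : Ladj (pv i) (tv t)) (it' : Ladj (pv i) (tv (rtr s i t)))
    (iu : Ladj (pv i) (tv u3)) n12 nt1 nt2.
rewrite e1 e2; apply: contra => /eqP -> //.
Qed.

Definition Dset n : {set 'I_n * triple n} := [set p : 'I_n * triple n | p.1 \in val p.2].
Definition Cset n (s : scheme (LV n)) : {set 'I_n * triple n} :=
  [set p in Dset n | p.1 < op s p.1 p.2].

Definition sigm n (s : scheme (LV n)) (p : 'I_n * triple n) : 'I_n * triple n :=
  (op s p.1 p.2, if rtr s (op s p.1 p.2) p.2 == rtr s p.1 p.2 then p.2 else rtr s p.1 p.2).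

Lemma sig_prop n (s : scheme (LV n)) (i : 'I_n) (t : triple n) : 4 <= n -> qs s -> i \in val t ->
  i != op s i t ->
  (op s i t \in val (sigm s (i, t)).2) /\ op s (op s i t) (sigm s (i, t)).2 = i.
Proof.
move=> n4 q it ne; have [hs _] := andP q.
have [a b c d] := opP n4 q it.
rewrite /sigm /=.
case: ifP => e.
  split => //; apply: op_eq => //; last by rewrite (eqP e) (rtrE hs it).2.
have f : rtr s (op s i t) (rtr s i t) = t by case: d => // h; rewrite h eqxx in e.
split => //; apply: op_eq => //; last by rewrite f.
exact: (rtrE hs it).2.
Qed.

Lemma half_C n (s : scheme (LV n)) : 4 <= n -> qs s -> 2 * #|Cset s| <= #|Dset n|.
Proof.
move=> n4 q; have [hs _] := andP q.
have sub : sigm s @: Cset s \subset Dset n :\: Cset s.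
  apply/subsetP => _ /imsetP [[i t] + ->]; rewrite !inE /= => /andP [it lt].
  have ne : i != op s i t by rewrite neq_ltn lt.
  have [h1 h2] := sig_prop n4 q it ne.
  by rewrite h1 /= h2 -leqNgt ltnW.
have inj : {in Cset s &, injective (sigm s)}.
  move=> [i1 t1] [i2 t2]; rewrite !inE /= => /andP [it1 lt1] /andP [it2 lt2] E.
  have ne1 : i1 != op s i1 t1 by rewrite neq_ltn lt1.
  have ne2 : i2 != op s i2 t2 by rewrite neq_ltn lt2.
  have [h1 h2] := sig_prop n4 q it1 ne1.
  have [h1' h2'] := sig_prop n4 q it2 ne2.
  have ei : i1 = i2 := etrans (esym h2) (etrans (congr1 (fun p : 'I_n * triple n => op s p.1 p.2) E) h2').
  subst i2; congr (_, _).
  have [a1 b1 c1 d1] := opP n4 q it1; have [a2 b2 c2 d2] := opP n4 q it2.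
  move: E; rewrite /sigm /= => [[ex]].
  rewrite -ex in a2 b2 c2 d2 *.
  set x := op s i1 t1 in a1 b1 c1 d1 a2 b2 c2 d2 ex *.
  case: ifP => e1; case: ifP => e2 //.
  - move=> E; move/eqP: e1 => e1.
    have f : rtr s x t1 = t2 by case: d2 => h; [rewrite -E in h | rewrite h eqxx in e2].
    by have := no2cyc n4 q it1; rewrite -e1 f -E eqxx.
  - move=> E; move/eqP: e2 => e2.
    have f : rtr s x t2 = t1 by case: d1 => h; [rewrite E in h | rewrite h eqxx in e1].
    by have := no2cyc n4 q it2; rewrite -e2 f E eqxx.
  - exact: rtr_inj hs it1 it2.
have := card_in_imset inj; have := subset_leq_card sub.
rewrite cardsD (setIidPr _); last by apply/subsetP => p; rewrite inE => /andP [].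
move=> h1 h2; rewrite h2 in h1; move: h1; set c := #|Cset s|; set d := #|Dset n|; lia.
Qed.

Lemma card_bigcup_le (I T : finType) (P : pred I) (F : I -> {set T}) :
  #|\bigcup_(i | P i) F i| <= \sum_(i | P i) #|F i|.
Proof.
apply: (big_ind2 (fun (A : {set T}) m => #|A| <= m)) => //.
- by rewrite cards0.
- move=> A1 m1 A2 m2 h1 h2; apply: leq_trans (leq_add h1 h2).
  by rewrite cardsU leq_subr.
Qed.

Lemma Dset_bound n : 2 * #|Dset n| <= n ^ 3.
Proof.
have h1 : #|Dset n| <= 3 * #|{: triple n}|.
  have sub : Dset n \subset \bigcup_(t : triple n) [set (i, t) | i in val t].
    apply/subsetP => [[i t]]; rewrite inE /= => it.
    by apply/bigcupP; exists t => //; apply/imsetP; exists i.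
  apply: (leq_trans (subset_leq_card sub)); apply: (leq_trans (card_bigcup_le _ _)).
  apply: (@leq_trans (\sum_(t : triple n) 3)).
    apply: leq_sum => t _; apply: (leq_trans (leq_imset_card _ _)).
    by rewrite (eqP (valP t)).
  by rewrite sum_nat_const mulnC.
have h2 : #|{: triple n}| = 'C(n, 3).
  have := card_draws ('I_n) 3; rewrite card_ord cardsE => <-.
  by rewrite card_sig.
have h3 : 'C(n, 3) * 6 = n ^_ 3 by rewrite -bin_ffact.
have h4 : n ^_ 3 <= n ^ 3 by rewrite !ffactnS ffactn0 muln1; lia.
lia.
Qed.

Definition d1 : W1 := (false, ord0, ord0, false).
Definition P1 n : {set {ffun 'I_n * triple n -> W1}} :=
  [set f | f \in pffun_on d1 (Dset n) [set: W1]].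
Definition S2 n : {set {ffun 'I_n * triple n -> option 'I_n}} :=
  \bigcup_(C | (C \in powerset (Dset n)) && (2 * #|C| <= #|Dset n|))
     [set f | f \in pffun_on None C [set: option 'I_n]].

Lemma code1_in n (s : scheme (LV n)) : code1 s \in P1 n.
Proof.
rewrite inE; apply/pffun_onP; split; last by move=> ? _; rewrite inE.
apply/subsetP => p; rewrite !inE ffunE; case: ifP => //.
Qed.

Lemma code2_in n (s : scheme (LV n)) : 4 <= n -> qs s -> code2 s \in S2 n.
Proof.
move=> n4 q; apply/bigcupP; exists (Cset s).
  rewrite powersetE (half_C n4 q) andbT.
  by apply/subsetP => p; rewrite inE => /andP [].
rewrite inE; apply/pffun_onP; split; last by move=> ? _; rewrite inE.
apply/subsetP => p; rewrite !inE ffunE; case: ifP => //.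
Qed.

Lemma card_P1 n : #|P1 n| = 36 ^ #|Dset n|.
Proof. by rewrite cardsE card_pffun_on cardsT !card_prod card_bool card_ord. Qed.

Lemma card_S2 n : #|S2 n| <= 2 ^ #|Dset n| * n.+1 ^ (#|Dset n| ./2).
Proof.
apply: (leq_trans (card_bigcup_le _ _)).
apply: (@leq_trans (\sum_(C | (C \in powerset (Dset n)) && (2 * #|C| <= #|Dset n|)) n.+1 ^ (#|Dset n| ./2))).
  apply: leq_sum => C /andP [_ hC].
  rewrite cardsE card_pffun_on cardsT card_option card_ord.
  by rewrite leq_pexp2l // geq_half_double -mul2n.
rewrite sum_nat_const leq_mul2r -card_powerset; apply/orP; right.
by apply: subset_leq_card; apply/subsetP => C; rewrite unfold_in => /andP [].
Qed.

Lemma count_bound n : 4 <= n ->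
  num_quad_embeddings (@Ladj n) <= 36 ^ #|Dset n| * (2 ^ #|Dset n| * n.+1 ^ (#|Dset n| ./2)).
Proof.
move=> n4; rewrite /num_quad_embeddings; apply: leq_trans (leq_imset_card _ _) _.
set Q := [set s | _].
have inj : {in Q &, injective (fun s => (code1 s, code2 s))}.
  move=> s1 s2; rewrite !inE => q1 q2 [e1 e2]; exact: code_inj n4 q1 q2 e1 e2.
rewrite -(card_in_imset inj) -card_P1.
apply: leq_trans (_ : #|setX (P1 n) (S2 n)| <= _); last by rewrite cardsX leq_mul2l card_S2 orbT.
apply: subset_leq_card; apply/subsetP => _ /imsetP [s + ->].
by rewrite inE => q; rewrite in_setX code1_in code2_in.
Qed.

Local Open Scope R_scope.

Lemma ln_le' x y : 0 < x -> x <= y -> ln x <= ln y.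
Proof.
move=> hx hxy; case: (Rle_lt_or_eq_dec _ _ hxy) => h.
- by apply: Rlt_le; apply: ln_increasing.
- by rewrite h; apply: Rle_refl.
Qed.

Lemma exp_le' x y : x <= y -> exp x <= exp y.
Proof.
move=> hxy; case: (Rle_lt_or_eq_dec _ _ hxy) => h.
- by apply: Rlt_le; apply: exp_increasing.
- by rewrite h; apply: Rle_refl.
Qed.

Lemma ln_le_self x : 0 < x -> ln x <= x.
Proof.
move=> hx; rewrite -{2}(ln_exp x); apply: ln_le' => //.
have := exp_ineq1_le x; lra.
Qed.

Lemma ln2_le1 : ln 2 <= 1.
Proof.
rewrite -[X in _ <= X](ln_exp 1); apply: ln_le'; first lra.
have := exp_ineq1_le 1; lra.
Qed.

Lemma eps_cv : Un_cv (fun n : nat => 40 / ln (INR n)) 0.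
Proof.
move=> e he.
have [N hN] := INR_unbounded (exp (40 / e) + 2).
exists N => n hn.
have hN' : exp (40 / e) + 2 < INR n.
  apply: (Rlt_le_trans _ _ _ hN); by apply: le_INR.
have he' : 0 < 40 / e by apply: Rdiv_lt_0_compat; lra.
have hexp : 0 < exp (40 / e) := exp_pos _.
have hl : 40 / e < ln (INR n).
  rewrite -(ln_exp (40 / e)); apply: ln_increasing => //; lra.
have hlpos : 0 < ln (INR n) by lra.
rewrite /R_dist Rminus_0_r Rabs_right; last first.
  apply: Rle_ge; apply: Rlt_le; apply: Rdiv_lt_0_compat => //; lra.
apply: (Rmult_lt_reg_r (ln (INR n))) => //.
rewrite /Rdiv Rmult_assoc Rinv_l; last lra.
move: hl; rewrite /Rdiv => hl.
have := Rmult_lt_compat_l e _ _ he hl.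
rewrite -Rmult_assoc (Rmult_comm e 40) Rmult_assoc Rinv_r; lra.
Qed.

Lemma INR_muln a b : INR (a * b)%N = INR a * INR b.
Proof. by rewrite -multE mult_INR. Qed.

Lemma INR_expn m k : INR (m ^ k)%N = INR m ^ k.
Proof.
elim: k => [|k IH]; first by rewrite expn0.
by rewrite expnS INR_muln IH.
Qed.

Lemma main_bound n : (4 <= n)%N ->
  INR (num_quad_embeddings (@Ladj n))
    <= Rpower 2 ((1/4 + 40 / ln (INR n)) * (INR n ^ 3) * (ln (INR n) / ln 2)).
Proof.
move=> n4.
have c := count_bound n4; have d := Dset_bound n.
set D := #|Dset n| in c d; set h := (D./2)%N in c.
have hh : (h.*2 <= D)%N by rewrite -geq_half_double.
set N := INR n.
have e4 : INR 4 = 4 by rewrite INR_IZR_INZ.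
have hN : 4 <= N by rewrite /N -e4; apply: le_INR; apply/leP.
set L := ln N.
have hL : 0 < L by rewrite /L -ln_1; apply: ln_increasing; lra.
have hln2 : / 2 < ln 2 := ln_lt_2.
have hln2' := ln2_le1.
have e36 : INR 36 = 36 by rewrite INR_IZR_INZ.
have e2 : INR 2 = 2 by rewrite INR_IZR_INZ.
have hD : 2 * INR D <= N ^ 3.
  have := le_INR _ _ (elimT leP d); by rewrite INR_muln INR_expn e2.
have hh' : 2 * INR h <= INR D.
  have := le_INR _ _ (elimT leP hh); by rewrite -muln2 INR_muln e2 Rmult_comm.
have hD0 := pos_INR D; have hh0 := pos_INR h.
apply: (Rle_trans _ (INR (36 ^ D * (2 ^ D * n.+1 ^ h))%N)).
  by apply: le_INR; apply/leP.
rewrite INR_muln INR_muln !INR_expn e36 e2 S_INR -/N.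
have hN1 : 0 < N + 1 by lra.
set B := 36 ^ D * (2 ^ D * (N + 1) ^ h).
have hB : 0 < B by rewrite /B; apply: Rmult_lt_0_compat; [|apply: Rmult_lt_0_compat]; apply: pow_lt; lra.
rewrite -(exp_ln B hB) /Rpower; apply: exp_le'.
have -> : (1 / 4 + 40 / L) * N ^ 3 * (L / ln 2) * ln 2 = N ^ 3 * L / 4 + 40 * N ^ 3.
  field; split; lra.
rewrite /B ln_mult ?ln_mult ?ln_pow; try (apply: pow_lt; lra); try lra.
  2: by apply: Rmult_lt_0_compat; apply: pow_lt; lra.
have l36 : ln 36 <= 36 by apply: ln_le_self; lra.
have l36' : 0 <= ln 36 by rewrite -ln_1; apply: ln_le'; lra.
have lN1 : ln (N + 1) <= 1 + L.
  apply: (Rle_trans _ (ln (2 * N))); first by apply: ln_le'; lra.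
  rewrite ln_mult -/L; lra.
have lN1' : 0 <= ln (N + 1) by rewrite -ln_1; apply: ln_le'; lra.
have t1 : INR D * ln 36 <= INR D * 36 by apply: Rmult_le_compat_l.
have t2 : INR D * ln 2 <= INR D * 1 by apply: Rmult_le_compat_l.
have t3 : INR h * ln (N + 1) <= INR h * (1 + L) by apply: Rmult_le_compat_l.
have t4 : INR h * (1 + L) <= (N ^ 3 / 4) * (1 + L) by apply: Rmult_le_compat_r; lra.
have t5 : (N ^ 3 / 4) * (1 + L) = N ^ 3 / 4 + N ^ 3 * L / 4 by field.
have hN3 : 0 <= N ^ 3 by apply: pow_le; lra.
lra.
Qed.

Theorem lemma4p1 :
  exists eps : nat -> R,
    Un_cv eps 0 /\
    forall n : nat, (4 <= n)%N ->
      INR (num_quad_embeddings (@Ladj n))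
        <= Rpower 2 ((1/4 + eps n) * (INR n ^ 3) * (ln (INR n) / ln 2)).
Proof.
exists (fun n : nat => 40 / ln (INR n)); split.
- exact: eps_cv.
- move=> n n4; exact: main_bound.
Qed.
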